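(* Let $m\ge 1$ and $r\ge 0$ be integers, let $n$ be a positive integer and let $x$ be a real number. Then \[ {\sum}^{2r}(x+n)^{2m}=\sum_{k=1}^m T(2m,2k)\left\{\frac{(x+n+r)(x+n+k+2r-1)_{2k+2r-1}}{(2k+2r)_{2r}}-\sum_{i=1}^{2r}\binom{n+2r-i-1}{2r-i}\frac{(2x+i)(x+k+i-1)_{2k+i-1}}{2(2k+i)_i}\right\}. \]
   Context: $(y)_k=y(y-1)\cdots(y-k+1)$ is the lower factorial ($(y)_0=1$). The $r$-fold sum is defined by ${\sum}^0 f(n)=f(n)$ and ${\sum}^r f(n)={\sum}^{r-1}f(1)+{\sum}^{r-1}f(2)+\cdots+{\sum}^{r-1}f(n)$; equivalently ${\sum}^r f(n)=\sum_{1\le i_1\le\cdots\le i_r\le n} f(i_1)$, here with $f(n)=(x+n)^{2m}$. The central factorials are $y^{[k]}=y\,(y+k/2-1)_{k-1}$ for $k\ge1$, and the central factorial numbers $T(m,k)$ are the coefficients determined by $y^m=\sum_{k=1}^m T(m,k)\,y^{[k]}$ for all $y$ and $m\ge 1$. *)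

(* Defs.v *)
From HB Require Import structures.
From mathcomp Require Import all_boot all_order all_algebra.
Set Implicit Arguments. Unset Strict Implicit. Unset Printing Implicit Defensive.
Import Order.TTheory GRing.Theory Num.Theory.
Local Open Scope ring_scope.

Definition lfact (R : ringType) (y : R) (k : nat) : R :=
  \prod_(i < k) (y - i%:R).

Definition cfact (R : fieldType) (y : R) (k : nat) : R :=
  if k is k'.+1 then y * lfact (y + k%:R / 2%:R - 1) k' else 1.

Fixpoint rsum (R : ringType) (r : nat) (f : nat -> R) (n : nat) : R :=
  match r with
  | 0 => f n
  | r'.+1 => \sum_(1 <= j < n.+1) rsum r' f j
  end.

Definition is_central_factorial_numbers (R : fieldType) (T : nat -> nat -> R) : Prop :=
  forall (m : nat) (y : R), (1 <= m)%N ->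
    y ^+ m = \sum_(1 <= k < m.+1) T m k * cfact y k.

(* Main.v *)
Require Import Defs.
From HB Require Import structures.
From mathcomp Require Import all_boot all_order all_algebra.
From mathcomp Require Import zify ring.
Import Order.TTheory GRing.Theory Num.Theory.
Local Open Scope ring_scope.

Lemma rsum_eq (R : ringType) s (f g : nat -> R) n :
  (forall j, f j = g j) -> rsum s f n = rsum s g n.
Proof.
move=> fg; elim: s n => [|s IH] n /=; first exact: fg.
by apply: eq_bigr => j _; rewrite IH.
Qed.

Lemma hockey a n :
  (\sum_(1 <= j < n.+1) 'C(j + a - 1, a) = 'C(n + a, a.+1))%N.
Proof.
elim: n => [|n IH]; first by rewrite big_geq // bin_small.
rewrite big_nat_recr //= IH addSn binS.
by have -> : (n.+1 + a - 1 = n + a)%N by lia.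
Qed.

Lemma telesc (R : ringType) (A : nat -> R -> R)
  (hA : forall i y, A i.+1 y - A i.+1 (y - 1) = A i y) s x n :
  \sum_(1 <= j < n.+1) A s (x + j%:R) = A s.+1 (x + n%:R) - A s.+1 x.
Proof.
elim: n => [|n IH]; first by rewrite big_geq // addr0 subrr.
rewrite big_nat_recr //= IH -(hA s).
have -> : x + n.+1%:R - 1 = x + n%:R by rewrite -natr1 addrA addrK.
by rewrite addrC addrA subrK.
Qed.

Lemma rsum_closed (R : ringType) (A : nat -> R -> R)
  (hA : forall i y, A i.+1 y - A i.+1 (y - 1) = A i y) s x n :
  rsum s (fun j => A 0%N (x + j%:R)) n =
  A s (x + n%:R) - \sum_(1 <= i < s.+1) 'C(n + s - i - 1, s - i)%:R * A i x.
Proof.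
elim: s n => [|s IH] n /=; first by rewrite big_geq // subr0.
under eq_bigr do rewrite IH.
rewrite sumrB telesc // exchange_big /=.
rewrite [in RHS]big_nat_recr //= subnn bin0 mul1r.
rewrite opprD addrA [in RHS]addrAC; congr (_ - _ - _).
apply: eq_big_nat => i /andP [i1 i2].
rewrite -mulr_suml.
have -> : \sum_(1 <= j < n.+1) ('C(j + s - i - 1, s - i)%:R : R)
   = ('C(n + (s-i), (s-i).+1))%:R.
  rewrite -hockey natr_sum; apply: eq_bigr => j _; congr (_%:R); congr 'C(_,_); lia.
congr (_%:R * _); congr 'C(_, _); lia.
Qed.
Lemma two_neq0 (R : numFieldType) : (2%:R : R) != 0.
Proof. by rewrite pnatr_eq0. Qed.

Lemma cfact_opp (R : numFieldType) (y : R) k :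
  cfact (- y) k = (-1) ^+ k * cfact y k.
Proof.
case: k => [|k] /=; first by rewrite expr0 mul1r.
rewrite /lfact (reindex_inj rev_ord_inj) /=.
have -> : \prod_(j < k) (- y + k.+1%:R / 2%:R - 1 - (rev_ord j : nat)%:R)
   = \prod_(j < k) ((-1) * (y + k.+1%:R / 2%:R - 1 - j%:R)).
  apply: eq_bigr => j _; rewrite /= natrB ?ltn_ord // -natr1 -!natr1.
  have h2 := two_neq0 R.
  field.
  done.
rewrite big_split /= prodr_const card_ord exprS; ring.
Qed.

Lemma sum_even (R : zmodType) (F : nat -> R) m :
  \sum_(1 <= k < (2 * m).+1) (if odd k then 0 else F k)
  = \sum_(1 <= k < m.+1) F (2 * k)%N.
Proof.
elim: m => [|m IH]; first by rewrite !big_geq.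
rewrite (_ : (2 * m.+1).+1 = (2 * m).+3)%N; last lia.
rewrite big_nat_recr // big_nat_recr //= IH [in RHS]big_nat_recr //=.
rewrite oddM andFb /=.
rewrite addr0 (_ : (2 * m).+2 = 2 * m.+1)%N //; lia.
Qed.

Lemma even_expand {R : realFieldType} {T : nat -> nat -> R}
  (hT : is_central_factorial_numbers T) m (hm : (1 <= m)%N) (y : R) :
  y ^+ (2 * m) = \sum_(1 <= k < m.+1) T (2 * m)%N (2 * k)%N * cfact y (2 * k).
Proof.
rewrite -(@sum_even _ (fun k => T (2 * m)%N k * cfact y k)).
have h1 := hT (2 * m)%N y (ltac:(lia)).
have h2 := hT (2 * m)%N (- y) (ltac:(lia)).
have e : (- y) ^+ (2 * m) = y ^+ (2 * m).
  by rewrite exprNn -signr_odd oddM andFb expr0 mul1r.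
rewrite e in h2.
have : 2%:R * y ^+ (2 * m) =
  2%:R * \sum_(1 <= k < (2 * m).+1) (if odd k then 0 else T (2 * m)%N k * cfact y k).
  rewrite mulr_sumr {1}mulr2n mulrDl mul1r {1}h1 h2 -big_split /=.
  apply: eq_bigr => k _; rewrite cfact_opp.
  case: (boolP (odd k)) => ok.
    rewrite -signr_odd ok expr1 mulr0; ring.
  rewrite -signr_odd (negbTE ok) expr0; ring.
move/(congr1 (fun z => z / 2%:R)).
by rewrite !(mulrC 2%:R) !mulfK ?two_neq0.
Qed.
Definition Bk (R : realFieldType) (k i : nat) (y : R) : R :=
  ((2%:R * y + i%:R) * lfact (y + k%:R + i%:R - 1) (2 * k + i - 1))
    / (2%:R * lfact (2 * k + i)%:R i).
Arguments Bk {R}.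

Lemma lfact_neq0 {R : realFieldType} N i : (i <= N)%N ->
  lfact (N%:R : R) i != 0.
Proof.
move=> iN; apply/prodf_neq0 => j _.
have jN : (j < N)%N by apply: (leq_trans (ltn_ord j)).
by rewrite -natrB ?pnatr_eq0 -?lt0n ?subn_gt0 // ltnW.
Qed.

Lemma Bk0 (R : realFieldType) k (y : R) : (1 <= k)%N ->
  Bk k 0 y = cfact y (2 * k).
Proof.
case: k => [//|k] _.
rewrite /Bk (_ : (2 * k.+1 = (2 * k).+2)%N); last lia.
rewrite /= /lfact big_ord0 addn0 addr0 mulr1 (_ : ((2 * k).+2 - 1 = (2*k).+1)%N); last lia.
have h2 := two_neq0 R.
rewrite mulrAC (mulrC 2%:R) mulfK //; congr (_ * _); apply: eq_bigr => i _.
rewrite -!natr1 natrM.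
by field.
Qed.

Lemma Bk_chain (R : realFieldType) k i (y : R) : (1 <= k)%N ->
  Bk k i.+1 y - Bk k i.+1 (y - 1) = Bk k i y.
Proof.
move=> k1; rewrite /Bk.
set M := (2 * k + i - 1)%N.
have eM : (2 * k + i.+1 - 1 = M.+1)%N by rewrite /M; lia.
have eN : (2 * k + i = M.+1)%N by rewrite /M; lia.
have eN2 : (2 * k + i.+1 = M.+2)%N by rewrite /M; lia.
rewrite eM eN2 eN.
have Dn : lfact (M.+1%:R : R) i != 0 by apply: lfact_neq0; lia.
set D := lfact (M.+1%:R : R) i.
have eD : lfact (M.+2%:R : R) i.+1 = M.+2%:R * D.
  rewrite /lfact big_ord_recl subr0; congr (_ * _); apply: eq_bigr => j _.
  by rewrite lift0 -!natr1; ring.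
rewrite eD.
have hMr : (M.+1%:R : R) = 2%:R * k%:R + i%:R by rewrite -eN natrD natrM.
set P := lfact (y + k%:R + i%:R - 1) M.
have e1 : lfact (y + k%:R + i.+1%:R - 1) M.+1 = (y + k%:R + i%:R) * P.
  rewrite /lfact big_ord_recl; congr (_ * _).
    by rewrite /= subr0 -natr1; ring.
  apply: eq_bigr => j _; rewrite lift0 -!natr1; ring.
have e2 : lfact (y - 1 + k%:R + i.+1%:R - 1) M.+1 = P * (y - k%:R).
  rewrite /lfact big_ord_recr; congr (_ * _).
    apply: eq_bigr => j _; rewrite -!natr1; ring.
  rewrite /= (_ : (M%:R : R) = 2%:R * k%:R + i%:R - 1).
    by rewrite -natr1; ring.
  by rewrite -hMr -natr1 addrK.
rewrite e1 e2 -(natr1 M.+1) hMr.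
have h2 := two_neq0 R.
have hN : 2%:R * k%:R + i%:R + 1 != 0 :> R.
  by rewrite -hMr natr1 pnatr_eq0.
rewrite -!natr1.
field.
by rewrite Dn hN.
Qed.

Theorem mainTheorem4 (R : realFieldType) (T : nat -> nat -> R)
  (hT : is_central_factorial_numbers T)
  (m r n : nat) (x : R) (hm : (1 <= m)%N) (hn : (1 <= n)%N) :
  rsum (2 * r) (fun j => (x + j%:R) ^+ (2 * m)) n =
  \sum_(1 <= k < m.+1) T (2 * m)%N (2 * k)%N *
    ( (x + n%:R + r%:R) * lfact (x + n%:R + k%:R + (2 * r)%:R - 1) (2 * k + 2 * r - 1)
        / lfact (2 * k + 2 * r)%:R (2 * r)
      - \sum_(1 <= i < (2 * r).+1)
          'C(n + 2 * r - i - 1, 2 * r - i)%:R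
          * ((2%:R * x + i%:R) * lfact (x + k%:R + i%:R - 1) (2 * k + i - 1))
          / (2%:R * lfact (2 * k + i)%:R i) ).
Proof.
pose A := fun i (y : R) => \sum_(1 <= k < m.+1) T (2 * m)%N (2 * k)%N * Bk k i y.
have hA : forall i y, A i.+1 y - A i.+1 (y - 1) = A i y.
  move=> i y; rewrite /A -sumrB; apply: eq_big_nat => k /andP [k1 _].
  by rewrite -mulrBr Bk_chain.
rewrite (@rsum_eq _ _ _ (fun j => A 0%N (x + j%:R))); last first.
  move=> j; rewrite (even_expand hT _ hm) /A; apply: eq_big_nat => k /andP [k1 _].
  by rewrite Bk0.
rewrite rsum_closed // /A.
under [RHS]eq_bigr do rewrite mulrBr.
rewrite sumrB; congr (_ - _).
  apply: eq_big_nat => k /andP [k1 _]; congr (_ * _); rewrite /Bk.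
  have Dn : lfact ((2 * k + 2 * r)%:R : R) (2 * r) != 0 by apply: lfact_neq0; lia.
  set L := lfact _ _; set D := lfact _ _.
  rewrite (natrM _ 2 r).
  have h2 := two_neq0 R.
  field.
  by rewrite Dn.
under eq_bigr do rewrite mulr_sumr.
rewrite exchange_big /=; apply: eq_bigr => k _; rewrite mulr_sumr.
apply: eq_bigr => i _; rewrite /Bk; ring.
Qed.
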